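(* The function $2^\omega\times\mathbf{K}\to[0;1]$, $(z,K)\mapsto\mathcal{D}^-_K(z)$, is of Baire class $2$ but not of Baire class $1$.
   Context: $2^{\omega}$ is the Cantor space; $N_s=\{x\in2^\omega:s\subset x\}$; $\mu$ is the coin-tossing measure, $\mu(N_s)=2^{-\mathrm{lh}(s)}$. $\mathbf{K}$ is the Polish space of compact subsets of $2^\omega$ with the Vietoris topology. $\mathcal{D}^-_K(z)=\liminf_{n\to\infty}\mu(K\cap N_{z\restriction n})/\mu(N_{z\restriction n})$. A function between metrizable spaces is of Baire class $\alpha$ if the preimage of every open set is in $\boldsymbol{\Sigma}^0_{\alpha+1}$. *)

(* Defs.v *)
From HB Require Import structures.
From mathcomp Require Import all_boot all_order all_algebra.
From mathcomp Require Import all_classical all_reals all_analysis.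

Set Implicit Arguments.
Unset Strict Implicit.
Unset Printing Implicit Defensive.

Import Order.TTheory GRing.Theory Num.Theory.
Import numFieldNormedType.Exports.

Local Open Scope classical_set_scope.
Local Open Scope ring_scope.

(* Sigma0 n A  <->  A is in boldface Sigma^0_n  (n >= 1; Sigma0 0 is empty).
   Sigma^0_1 = open sets; Sigma^0_{n+1} = countable unions of complements of
   Sigma^0_n sets (i.e. of Pi^0_n sets). *)
Fixpoint Sigma0 {T : topologicalType} (n : nat) (A : set T) : Prop :=
  match n with
  | 0 => False
  | n'.+1 =>
      if n' is 0 then open A
      else exists F : (set T)^nat,
             (forall i, Sigma0 n' (~` F i)) /\ A = \bigcup_i F i
  end.

Definition baire_class {X Y : topologicalType} (n : nat) (f : X -> Y) : Prop :=
  forall U : set Y, open U -> Sigma0 n.+1 (f @^-1` U).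

Definition restr (z : cantor_space) (n : nat) : seq bool := mkseq z n.

Definition cyl (s : seq bool) : set cantor_space :=
  [set x : cantor_space | restr x (size s) = s].

Definition cyl_opt (o : option (seq bool)) : set cantor_space :=
  if o is Some s then cyl s else set0.

Definition cyl_weight {R : realType} (o : option (seq bool)) : \bar R :=
  if o is Some s then ((2%:R ^- size s : R)%:E) else 0%E.

(* The coin-tossing (outer) measure: the Caratheodory outer measure generated
   by mu(N_s) = 2^-lh(s), i.e. the infimum of sum_i 2^-lh(s_i) over all
   countable (possibly finite) covers of A by basic cylinders N_{s_i}.
   It agrees with the coin-tossing measure on all Borel sets. It is always
   in [0,1] so we take its real value. *)
Definition mu {R : realType} (A : set cantor_space) : R :=
  fine (ereal_inf
    [set (\sum_(i <oo) (@cyl_weight R (t i)))%E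
       | t in [set t : nat -> option (seq bool) |
                 A `<=` \bigcup_i cyl_opt (t i)]]).

Definition lower_density {R : realType} (K : set cantor_space)
    (z : cantor_space) : R :=
  limn_inf (fun n => @mu R (K `&` cyl (restr z n)) / @mu R (cyl (restr z n))).

Record compact_set := CompactSet {
  cset :> set cantor_space;
  cset_compact : compact cset }.

HB.instance Definition _ := gen_eqMixin compact_set.
HB.instance Definition _ := gen_choiceMixin compact_set.

Definition vietoris_subbase (i : bool * set cantor_space) : set compact_set :=
  if i.1 then [set K : compact_set | (K : set cantor_space) `<=` i.2]
  else [set K : compact_set | (K : set cantor_space) `&` i.2 !=set0].

HB.instance Definition _ :=
  isSubBaseTopological.Build compact_set
    [set i : bool * set cantor_space | open i.2] vietoris_subbase.

Definition density_map {R : realType} (p : cantor_space * compact_set) : R :=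
  lower_density (p.2 : set cantor_space) p.1.

(* Main.v *)
Require Import Defs.
From HB Require Import structures.
From mathcomp Require Import all_boot all_order all_algebra.
From mathcomp Require Import all_classical all_reals all_analysis.
Import numFieldNormedType.Exports.
From mathcomp Require Import finmap ring lra.
Unset Strict Implicit.
Unset Printing Implicit Defensive.
Import Order.TTheory GRing.Theory Num.Theory.

Module Aux.
Local Open Scope classical_set_scope.
Local Open Scope ring_scope.


Lemma open_prodP {T U : topologicalType} (A : set (T * U)) :
  (forall p, A p -> exists P Q, [/\ open P, open Q, P p.1, Q p.2 & P `*` Q `<=` A]) ->
  open A.
Proof.
move=> H; rewrite openE => p /H [P [Q [oP oQ Pp Qp PQA]]].
rewrite /interior; exists (P, Q) => //=; split.
- by apply: open_nbhs_nbhs; split.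
- by apply: open_nbhs_nbhs; split.
Qed.

Lemma sub_open (i : bool * set cantor_space) : open i.2 -> open (vietoris_subbase i).
Proof.
move=> oi.
exists [set vietoris_subbase i].
  by move=> _ ->; apply: finI_from1.
by rewrite predeqE => K; split => [[_ ->]|] //; exists (vietoris_subbase i).
Qed.

Lemma vietoris_preimage_open {T : topologicalType} (g : T -> compact_set) :
  (forall i, open i.2 -> open (g @^-1` vietoris_subbase i)) ->
  forall A, open A -> open (g @^-1` A).
Proof.
move=> Hg A [D' sD' <-].
rewrite preimage_bigcup; apply: bigcup_open => B /sD' [F sF <-].
rewrite openE => x Bx; rewrite /interior.
rewrite preimage_bigcap.
apply: filter_bigI => i iF.
have Di := sF i iF.
have Di' : open i.2 by move: Di; rewrite in_setE.
have := Hg i Di'; rewrite openE; apply.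
by apply: Bx; rewrite /= in iF *.
Qed.

Lemma size_restr x n : size (restr x n) = n.
Proof. by rewrite /restr size_mkseq. Qed.

Lemma nth_restr x n i : (i < n)%N -> nth false (restr x n) i = x i.
Proof. by move=> lt; rewrite /restr nth_mkseq. Qed.

Lemma cylP s x : cyl s x <-> forall i, (i < size s)%N -> x i = nth false s i.
Proof.
rewrite /cyl /=; split.
  by move=> E i lt; rewrite -E nth_restr // size_restr.
move=> H; apply: (@eq_from_nth _ false); first by rewrite size_restr.
by move=> i; rewrite size_restr => lt; rewrite nth_restr // H.
Qed.

Lemma coord_open i b : open [set x : cantor_space | x i = b].
Proof.
suff : @open cantor_space (proj i @^-1` [set b]) by [].
apply: open_comp; [move=> + _; exact: proj_continuous| apply: discrete_open].
Qed.

Lemma coord_closed i b : closed [set x : cantor_space | x i = b].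
Proof.
rewrite -openC; have -> : ~` [set x : cantor_space | x i = b] = [set x | x i = ~~ b].
  by apply/seteqP; split => x /=; case: (x i); case: b.
exact: coord_open.
Qed.

Lemma pre_open_closed (s : seq bool) n :
  open [set x : cantor_space | forall i, (i < n)%N -> x i = nth false s i] /\
  closed [set x : cantor_space | forall i, (i < n)%N -> x i = nth false s i].
Proof.
elim: n => [|n [IHo IHc]].
  have -> : [set x : cantor_space | forall i, (i < 0)%N -> x i = nth false s i] = setT.
    by apply/seteqP; split => x //=.
  by split; [exact: openT|exact: closedT].
have -> : [set x : cantor_space | forall i, (i < n.+1)%N -> x i = nth false s i] =
  [set x : cantor_space | forall i, (i < n)%N -> x i = nth false s i] `&` [set x | x n = nth false s n].
  apply/seteqP; split => x /=.
    by move=> H; split; [move=> i lt; apply: H; rewrite ltnS ltnW|apply: H].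
  by move=> [H1 H2] i; rewrite ltnS leq_eqVlt => /orP[/eqP->//|/H1].
by split; [apply: openI => //; exact: coord_open|apply: closedI => //; exact: coord_closed].
Qed.

Lemma cylE s : cyl s = [set x : cantor_space | forall i, (i < size s)%N -> x i = nth false s i].
Proof. by apply/seteqP; split => x /cylP. Qed.

Lemma cyl_open s : open (cyl s).
Proof. by rewrite cylE; case: (pre_open_closed s (size s)). Qed.

Lemma cyl_closed s : closed (cyl s).
Proof. by rewrite cylE; case: (pre_open_closed s (size s)). Qed.

Lemma cyl_compact s : compact (cyl s).
Proof. exact: (subclosed_compact (cyl_closed s) cantor_space_compact (@subsetT _ _)). Qed.


Section M.
Context {R : realType}.

Definition covS (A : set cantor_space) : set (\bar R) :=
  [set (\sum_(i <oo) (@cyl_weight R (t i)))%E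
       | t in [set t : nat -> option (seq bool) |
                 A `<=` \bigcup_i cyl_opt (t i)]].

Definition wt (s : seq bool) : R := 2%:R ^- size s.

Lemma wt_ge0 s : 0 <= wt s.
Proof. by rewrite /wt invr_ge0 exprn_ge0. Qed.

Lemma wt_gt0 s : 0 < wt s.
Proof. by rewrite /wt invr_gt0 exprn_gt0. Qed.

Lemma cw_ge0 o : (0 <= @cyl_weight R o)%E.
Proof. by case: o => [s|] //=; rewrite lee_fin invr_ge0 exprn_ge0. Qed.

Lemma sum_ge0 (t : nat -> option (seq bool)) : (0 <= \sum_(i <oo) @cyl_weight R (t i))%E.
Proof. by apply: nneseries_ge0 => n _ _; exact: cw_ge0. Qed.

Definition t1 (s : seq bool) : nat -> option (seq bool) :=
  fun i => if i is 0%N then Some s else None.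

Lemma sum_t1 s : (\sum_(i <oo) @cyl_weight R (t1 s i))%E = (wt s)%:E.
Proof.
rewrite (@nneseries_split R _ 0 1); last by move=> k _; exact: cw_ge0.
rewrite add0n big_nat1 /= eseries0 ?adde0 //.
by move=> i; case: i.
Qed.

Lemma covS_t1 A s : A `<=` cyl s -> covS A (wt s)%:E.
Proof.
move=> As; exists (t1 s); last exact: sum_t1.
by move=> x /As Ax; exists 0%N.
Qed.

Lemma inf_covS_ge0 A : (0 <= ereal_inf (covS A))%E.
Proof. by apply: le_ereal_inf_tmp => _ [t _ <-]; exact: sum_ge0. Qed.

Lemma inf_covS_le A s : A `<=` cyl s -> (ereal_inf (covS A) <= (wt s)%:E)%E.
Proof. by move=> As; apply: ereal_inf_lbound; exact: covS_t1. Qed.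

Lemma cyl_nil : cyl [::] = setT.
Proof. by apply/seteqP; split => x //= _; rewrite /cyl /= /restr. Qed.

Lemma muE A : (@mu R A)%:E = ereal_inf (covS A).
Proof.
rewrite /mu fineK //; rewrite ge0_fin_numE ?inf_covS_ge0 //.
apply: (le_lt_trans (@inf_covS_le A [::] _)); first by rewrite cyl_nil.
by rewrite ltey.
Qed.

Lemma mu_ge0 A : 0 <= @mu R A.
Proof. by rewrite -lee_fin muE inf_covS_ge0. Qed.

Lemma mu_le_cover A (t : nat -> option (seq bool)) :
  A `<=` \bigcup_i cyl_opt (t i) -> ((@mu R A)%:E <= \sum_(i <oo) @cyl_weight R (t i))%E.
Proof. by move=> At; rewrite muE; apply: ereal_inf_lbound; exists t. Qed.

Lemma mu_le_cyl A s : A `<=` cyl s -> @mu R A <= wt s.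
Proof. by move=> As; rewrite -lee_fin muE inf_covS_le. Qed.

Lemma mu_mono A B : A `<=` B -> @mu R A <= @mu R B.
Proof.
move=> AB; rewrite -lee_fin !muE; apply: ereal_inf_le_tmp.
by move=> _ [t Bt <-]; exists t => //; apply: subset_trans Bt.
Qed.

Lemma mu_approx A (e : R) : 0 < e -> exists t : nat -> option (seq bool),
  A `<=` \bigcup_i cyl_opt (t i) /\ (\sum_(i <oo) @cyl_weight R (t i) < (@mu R A + e)%:E)%E.
Proof.
move=> e0; have : (ereal_inf (covS A) < (@mu R A + e)%:E)%E.
  by rewrite -muE lte_fin ltrDl.
by move=> /ereal_inf_lt [_ [t At <-] lt]; exists t.
Qed.

End M.


Definition pre (p c : seq bool) := take (size p) c == p.

Lemma take_restr x n m : (n <= m)%N -> take n (restr x m) = restr x n.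
Proof.
move=> nm; apply: (@eq_from_nth _ false).
  by rewrite size_takel ?size_restr.
move=> i; rewrite size_takel ?size_restr // => lin.
by rewrite nth_take // !nth_restr // (leq_trans lin nm).
Qed.

Lemma cyl_take c x n : cyl c x -> (n <= size c)%N -> take n c = restr x n.
Proof. by move=> cx h; have := take_restr x n (size c) h; rewrite /cyl /= in cx; rewrite cx. Qed.

Lemma cyl_comp c s x : cyl c x -> cyl s x -> pre c s \/ pre s c.
Proof.
move=> cx sx; case: (leqP (size c) (size s)) => h.
  by left; rewrite /pre (cyl_take _ _ _ sx h) /cyl /= cx.
by right; rewrite /pre (cyl_take _ _ _ cx (ltnW h)) sx.
Qed.

Lemma pre_size p c : pre p c -> (size p <= size c)%N.
Proof. by move=> /eqP <-; rewrite size_take; case: ltnP => // /ltnW. Qed.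

Section F.
Context {R : realType}.

Definition rw (o : option (seq bool)) : R := if o is Some c then wt c else 0.

Lemma rw_ge0 o : 0 <= rw o.
Proof. by case: o => //= c; exact: wt_ge0. Qed.

Lemma sum_ge_mem (l : seq (option (seq bool))) o : o \in l -> rw o <= \sum_(o' <- l) rw o'.
Proof.
elim: l => // a l IH; rewrite in_cons big_cons => /orP[/eqP->|/IH h].
  by rewrite lerDl sumr_ge0 // => i _; exact: rw_ge0.
by apply: (le_trans h); rewrite lerDr rw_ge0.
Qed.

Lemma wt_rcons s b : wt (rcons s b) + wt (rcons s b) = @wt R s.
Proof.
rewrite /wt size_rcons exprS; set y := (2%:R ^+ size s : R).
have y0 : y != 0 by rewrite /y expf_neq0 // pnatr_eq0.
by field.
Qed.

Lemma wt_le p c : (size p <= size c)%N -> @wt R c <= wt p.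
Proof.
move=> h; rewrite /wt lef_pV2 ?posrE ?exprn_gt0 //.
by rewrite ler_eXn2l // ltr1n.
Qed.

Lemma FL k : forall s (l : seq (option (seq bool))),
  (forall c, Some c \in l -> (size c <= size s + k)%N) ->
  (forall x, cyl s x -> exists2 o, o \in l & cyl_opt o x) ->
  wt s <= \sum_(o <- l) rw o.
Proof.
elim: k => [|k IH] s l Hsz Hcov.
- case: (pselect (exists2 c, Some c \in l & pre c s)) => [[c cl pcs]|np].
    by apply: (le_trans (wt_le _ _ (pre_size _ _ pcs))); exact: (sum_ge_mem _ _ cl).
  exfalso; pose x0 : cantor_space := fun i => nth false s i.
  have sx0 : cyl s x0 by apply/cylP.
  have [[c|] ol cx] := Hcov _ sx0 => //.
  case: (cyl_comp _ _ _ cx sx0) => h; first by apply: np; exists c.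
  have := pre_size _ _ h; have := Hsz c ol; rewrite addn0 => h1 h2.
  apply: np; exists c => //; rewrite /pre.
  have esz : size c = size s by apply/eqP; rewrite eqn_leq h1 h2.
  by move: h; rewrite /pre => /eqP; rewrite -{1}esz take_size => ->; rewrite take_size.
- case: (pselect (exists2 c, Some c \in l & pre c s)) => [[c cl pcs]|np].
    by apply: (le_trans (wt_le _ _ (pre_size _ _ pcs))); exact: (sum_ge_mem _ _ cl).
  pose p b (o : option (seq bool)) := if o is Some c then pre (rcons s b) c else false.
  have key b : wt (rcons s b) <= \sum_(o <- l | p b o) rw o.
    rewrite -big_filter; apply: IH.
      move=> c; rewrite mem_filter /= => /andP[_ /Hsz]; by rewrite size_rcons addSnnS.
    move=> x sbx.
    have sx : cyl s x.
      apply/cylP => i lt; move/cylP: sbx => /(_ i); rewrite size_rcons nth_rcons lt; apply.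
      exact: ltnW.
    have [[c|] ol cx] := Hcov _ sx => //.
    exists (Some c) => //; rewrite mem_filter ol andbT /=.
    case: (cyl_comp _ _ _ cx sx) => h; first by exfalso; apply: np; exists c.
    case: (cyl_comp _ _ _ cx sbx) => // h2.
    have e1 := pre_size _ _ h; have e2 := pre_size _ _ h2; rewrite size_rcons in e2.
    case: (ltnP (size s) (size c)) => lt.
      have esz : size c = size (rcons s b) by rewrite size_rcons; apply/eqP; rewrite eqn_leq e2 lt.
      by move: h2; rewrite /pre esz take_size => /eqP ->; rewrite take_size.
    exfalso; apply: np; exists c => //.
    have esz : size c = size s by apply/eqP; rewrite eqn_leq e1 lt.
    by move: h2; rewrite /pre esz -cats1 take_size_cat // => /eqP <-; rewrite take_size.
  have excl o : p false o -> p true o -> False.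
    case: o => // c /eqP h0 /eqP h1; move: h0 h1; rewrite !size_rcons => ->.
    by move/(congr1 rev); rewrite !rev_rcons => -[].
  apply: (@le_trans _ _ (\sum_(o <- l | p false o) rw o + \sum_(o <- l | p true o) rw o)).
    rewrite -(wt_rcons s false); apply: lerD => //.
    have -> : @wt R (rcons s false) = wt (rcons s true) by rewrite /wt !size_rcons.
    exact: key.
  rewrite (big_mkcond (p false)) (big_mkcond (p true)) -big_split /=.
  apply: ler_sum => o _; case: ifP => h0; case: ifP => h1.
  + by exfalso; exact: excl h0 h1.
  + by rewrite addr0.
  + by rewrite add0r.
  + by rewrite addr0 rw_ge0.
Qed.

End F.

Lemma cw_rw {R : realType} o : @cyl_weight R o = (rw o)%:E.
Proof. by case: o. Qed.

Lemma mu_cyl {R : realType} s : @mu R (cyl s) = wt s.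
Proof.
apply/eqP; rewrite eq_le mu_le_cyl //=.
rewrite -lee_fin muE; apply: le_ereal_inf_tmp => _ [t ct <-].
have : finite_subset_cover setT (fun i => cyl_opt (t i)) (cyl s).
  have := cyl_compact s; rewrite compact_cover; apply.
- by move=> i _; case: (t i) => [c|]; [exact: cyl_open|exact: open0].
- by move=> x /ct [i _ h]; exists i.
case=> D' _ cov.
pose N := (\max_(i <- D') i).+1.
pose l := map t (iota 0 N).
pose k := \max_(o <- l) (if o is Some c then size c else 0%N).
have h : @wt R s <= \sum_(o <- l) @rw R o.
  apply: (@FL R k s l).
- move=> c cl; apply: (leq_trans _ (leq_addl _ _)).
  by have := @leq_bigmax_seq _ l xpredT (fun o => if o is Some c then size c else 0%N) (Some c) cl isT.
- move=> x /cov [i iD fx]; exists (t i) => //.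
  rewrite /l map_f // mem_iota add0n /= ltnS.
  exact: (@leq_bigmax_seq _ (enum_fset D') xpredT id i iD isT).
have h2 := @nneseries_lim_ge R (fun i => @cyl_weight R (t i)) xpredT 0%N N (fun n _ _ => cw_ge0 (t n)).
apply: (le_trans _ h2).
under eq_bigr do rewrite cw_rw.
rewrite sumEFin lee_fin; apply: (le_trans h).
by rewrite /l big_map.
Qed.


Section LI.
Context {R : realType}.
Implicit Types (u : nat -> R).

Lemma bnd01 u : (forall n, 0 <= u n <= 1) -> bounded_fun (u : R^o^nat).
Proof.
move=> H; apply/ex_bound; first exact: (@globally_properfilter _ _ 0%N).
exists 1 => n _ /=.
by have /andP[h0 h1] := H n; rewrite ger0_norm.
Qed.

Lemma sdrop_ne u m : sdrop u m !=set0.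
Proof. by exists (u m); exists m => /=. Qed.

Lemma sdrop_lb u m : (forall n, 0 <= u n <= 1) -> has_lbound (sdrop u m).
Proof. by move=> H; exists 0 => _ [k _ <-]; have /andP[] := H k. Qed.

Lemma liminfE u : (forall n, 0 <= u n <= 1) -> limn_inf u = sup (range (infs u)).
Proof. by move=> H; apply: limn_infE; exact: bnd01. Qed.

Lemma infs_le u m n : (forall k, 0 <= u k <= 1) -> (m <= n)%N -> infs u m <= u n.
Proof. by move=> H mn; apply: ge_inf; [exact: sdrop_lb|exists n]. Qed.

Lemma infs_ub u m : (forall k, 0 <= u k <= 1) -> infs u m <= 1.
Proof. by move=> H; apply: (le_trans (infs_le u m m H (leqnn m))); have /andP[] := H m. Qed.

Lemma range_infs_ub u : (forall k, 0 <= u k <= 1) -> has_ubound (range (infs u)).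
Proof. by move=> H; exists 1 => _ [m _ <-]; exact: infs_ub H. Qed.

Lemma liminf_gt u (a : R) : (forall n, 0 <= u n <= 1) ->
  a < limn_inf u <-> exists q : rat, a < ratr q /\ exists m, forall n, (m <= n)%N -> ratr q <= u n.
Proof.
move=> H; rewrite liminfE //; split.
- move=> /sup_gt [|_ [m _ <-] lt]; first by exists (infs u 0); exists 0%N.
  have [q] := rat_in_itvoo lt; rewrite in_itv /= => /andP[aq qy].
  exists q; split => //; exists m => n mn.
  exact: (le_trans (ltW qy) (infs_le _ _ _ H mn)).
- move=> [q [aq [m Hm]]]; apply: (lt_le_trans aq).
  apply: (le_trans (y := infs u m)).
    by apply: lb_le_inf; [exact: sdrop_ne|move=> _ [k /= mk <-]; exact: Hm].
  by apply: ub_le_sup; [exact: range_infs_ub|exists m].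
Qed.

Lemma liminf_lt u (b : R) : (forall n, 0 <= u n <= 1) ->
  limn_inf u < b <-> exists q : rat, ratr q < b /\ forall m, exists n, (m <= n)%N /\ u n < ratr q.
Proof.
move=> H; rewrite liminfE //; split.
- move=> lt; have [q] := rat_in_itvoo lt; rewrite in_itv /= => /andP[Lq qb].
  exists q; split => // m.
  have : infs u m < ratr q.
    apply: le_lt_trans Lq; apply: ub_le_sup; [exact: range_infs_ub|by exists m].
  by move=> /inf_lt [|_ [n /= mn <-] unq]; [exact: sdrop_ne|exists n].
- move=> [q [qb Hm]]; apply: le_lt_trans qb.
  apply: ge_sup; first by exists (infs u 0); exists 0%N.
  move=> _ [m _ <-]; have [n [mn unq]] := Hm m.
  exact: (le_trans (infs_le _ _ _ H mn) (ltW unq)).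
Qed.

End LI.


Section S.
Context {T : topologicalType}.

Definition Gd (B : set T) := exists O : nat -> set T, (forall j, open (O j)) /\ B = \bigcap_j O j.
Definition S3 (A : set T) := exists P : nat -> set T, (forall i, Gd (P i)) /\ A = \bigcup_i P i.

Lemma open_Gd B : open B -> Gd B.
Proof.
move=> oB; exists (fun _ => B); split => //.
by apply/seteqP; split => [x Bx j _|x /(_ 0%N I)].
Qed.

Lemma Gd_bigcap (J : countType) (P : J -> set T) : (forall i, Gd (P i)) -> Gd (\bigcap_i P i).
Proof.
move=> H; have [Op HO] := choice H.
exists (fun k => if (choice.unpickle k : option (J * nat)) is Some ij then Op ij.1 ij.2 else setT); split.
  move=> k; case: (choice.unpickle k : option (J * nat)) => [[i j]|]; last exact: openT.
  by have [+ _] := HO i; apply.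
apply/seteqP; split.
- move=> x Px k _; case: (choice.unpickle k : option (J * nat)) => [[i j]|] //=.
  by have [_ E] := HO i; have := Px i I; rewrite E; apply.
- move=> x Hx i _; have [_ ->] := HO i; move=> j _.
  by have := Hx (choice.pickle (i, j)) I; rewrite choice.pickleK.
Qed.

Lemma Gd_setI A B : Gd A -> Gd B -> Gd (A `&` B).
Proof.
move=> GA GB; have -> : A `&` B = \bigcap_(b : bool) (if b then A else B).
  apply/seteqP; split => [x [Ax Bx] [] //|x H]; split; [exact: (H true I)|exact: (H false I)].
by apply: Gd_bigcap => -[].
Qed.

Lemma Gd_S3 A : Gd A -> S3 A.
Proof.
move=> GA; exists (fun _ => A); split => //.
by apply/seteqP; split => [x Ax|x [_ _ //]]; exists 0%N.
Qed.

Lemma Gd0 : Gd set0.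
Proof. exact/open_Gd/open0. Qed.

Lemma S3_bigcup (J : countType) (P : J -> set T) : (forall i, S3 (P i)) -> S3 (\bigcup_i P i).
Proof.
move=> H; have [Q HQ] := choice H.
exists (fun k => if (choice.unpickle k : option (J * nat)) is Some ij then Q ij.1 ij.2 else set0); split.
  move=> k; case: (choice.unpickle k : option (J * nat)) => [[i j]|]; last exact: Gd0.
  by have [+ _] := HQ i; apply.
apply/seteqP; split.
- move=> x [i _]; have [_ ->] := HQ i; move=> [j _ Qx].
  by exists (choice.pickle (i, j)) => //; rewrite choice.pickleK.
- move=> x [k _]; case: (choice.unpickle k : option (J * nat)) => [[i j]|] //= Qx.
  by exists i => //; have [_ ->] := HQ i; exists j.
Qed.

Lemma S3_setI A B : S3 A -> S3 B -> S3 (A `&` B).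
Proof.
move=> [P [GP ->]] [Q [GQ ->]].
have -> : \bigcup_i P i `&` \bigcup_i Q i = \bigcup_(ij : nat * nat) (P ij.1 `&` Q ij.2).
  apply/seteqP; split => [x [[i _ Pi] [j _ Qj]]|x [[i j] _ [/= Pi Qj]]].
    by exists (i, j).
  by split; [exists i|exists j].
by apply: S3_bigcup => ij; apply: Gd_S3; apply: Gd_setI.
Qed.

Lemma S3_Sigma A : S3 A -> Sigma0 3 A.
Proof.
move=> [P [GP ->]]; exists P; split => // i.
have [Op [oO ->]] := GP i.
exists (fun j => ~` Op j); split; first by move=> j; rewrite /= setCK.
by rewrite setC_bigcap.
Qed.

Lemma Sigma2_closed A : Sigma0 2 A -> exists F : nat -> set T, (forall i, closed (F i)) /\ A = \bigcup_i F i.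
Proof.
move=> [F [HF ->]]; exists F; split => // i.
by rewrite -openC; apply: HF.
Qed.

End S.


Definition UL (l : seq (seq bool)) : set cantor_space := fun x => exists2 c, c \in l & cyl c x.

Lemma UL_closed l : closed (UL l).
Proof.
elim: l => [|c l IH].
  have -> : UL [::] = set0 by apply/seteqP; split => x // [].
  exact: closed0.
have -> : UL (c :: l) = cyl c `|` UL l.
  apply/seteqP; split => x.
    by move=> [c']; rewrite in_cons => /orP[/eqP->|cl cx]; [left|right; exists c'].
  by case=> [cx|[c' cl cx]]; [exists c; rewrite ?mem_head|exists c'; rewrite // in_cons cl orbT].
by apply: closedU => //; exact: cyl_closed.
Qed.

Section L.
Context {R : realType}.

Lemma series_ge_partial (t : nat -> option (seq bool)) N :
  ((\sum_(0 <= i < N) @rw R (t i))%:E <= \sum_(i <oo) @cyl_weight R (t i))%E.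
Proof.
have h2 := @nneseries_lim_ge R (fun i => @cyl_weight R (t i)) xpredT 0%N N (fun n _ _ => cw_ge0 (t n)).
apply: (le_trans _ h2).
by rewrite -sumEFin; apply: lee_sum => i _; rewrite cw_rw.
Qed.

Lemma mu_le_list A l : A `<=` UL l -> @mu R A <= \sum_(c <- l) wt c.
Proof.
move=> Al.
pose t i := nth None (map Some l) i.
have h : ((@mu R A)%:E <= \sum_(i <oo) @cyl_weight R (t i))%E.
  apply: mu_le_cover.
  move=> x /Al [c cl cx]; exists (index c l) => //.
  by rewrite /t (nth_map [::]) ?index_mem // nth_index.
rewrite -lee_fin; apply: (le_trans h).
rewrite (@nneseries_split R _ 0 (size l)); last by move=> k _; exact: cw_ge0.
rewrite (@eseries0 R _ (0 + size l)%N xpredT); last first.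
  by move=> i; rewrite add0n => hi _; rewrite /t nth_default // size_map.
rewrite add0n.
have -> : (\sum_(0 <= k < size l) @cyl_weight R (t k))%E = (\sum_(c <- l) wt c)%:E.
  rewrite -sumEFin (big_nth [::]); apply: eq_big_nat => i /andP[_ hi].
  by rewrite /t (nth_map [::]).
by rewrite addr0.
Qed.

Lemma fin_sub (C : set cantor_space) (t : nat -> option (seq bool)) :
  compact C -> C `<=` \bigcup_i cyl_opt (t i) ->
  exists l : seq (seq bool), C `<=` UL l /\
    ((\sum_(c <- l) @wt R c)%:E <= \sum_(i <oo) @cyl_weight R (t i))%E.
Proof.
move=> cC Ct.
have : finite_subset_cover setT (fun i => cyl_opt (t i)) C.
  move: cC; rewrite compact_cover; apply.
  - by move=> i _; case: (t i) => [c|]; [exact: cyl_open|exact: open0].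
  - by move=> x /Ct [i _ h]; exists i.
case=> D' _ cov.
pose N := (\max_(i <- D') i).+1.
pose L := map t (iota 0 N).
exists (pmap id L); split.
  move=> x /cov [i iD fx]; case E : (t i) fx => [c|] // fx.
  exists c => //; rewrite mem_pmap map_id -E /L map_f // mem_iota add0n /= ltnS.
  exact: (@leq_bigmax_seq _ (enum_fset D') xpredT id i iD isT).
apply: le_trans (series_ge_partial t N).
rewrite lee_fin le_eqVlt; apply/orP; left; apply/eqP.
have -> : \sum_(0 <= i < N) @rw R (t i) = \sum_(o <- L) rw o by rewrite /L big_map.
elim: L => [|o L IH]; first by rewrite !big_nil.
by case: o => [c|]; rewrite /= !big_cons IH //= add0r.
Qed.

End L.


Lemma restr_cyl z z' n : cyl (restr z n) z' -> restr z' n = restr z n.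
Proof. by rewrite /cyl /= size_restr. Qed.

Lemma cyl_restr z n : cyl (restr z n) z.
Proof. by rewrite /cyl /= size_restr. Qed.

Section P1.
Context {R : realType}.
Local Notation X := (cantor_space * compact_set)%type.

Definition gfun n (p : X) : R :=
  @mu R ((p.2 : set cantor_space) `&` cyl (restr p.1 n)) / @mu R (cyl (restr p.1 n)).

Lemma density_mapE (p : X) : @density_map R p = limn_inf (fun n => gfun n p).
Proof. by []. Qed.

Lemma g01 (p : X) n : 0 <= gfun n p <= 1.
Proof.
rewrite /gfun mu_cyl; apply/andP; split.
  by rewrite divr_ge0 ?mu_ge0 ?wt_ge0.
rewrite ler_pdivrMr ?wt_gt0 // mul1r; apply: mu_le_cyl.
by move=> y [].
Qed.

Lemma g_lt_open n (q : R) : open [set p : X | gfun n p < q].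
Proof.
apply: open_prodP => -[z K] /= hlt.
rewrite /gfun /= mu_cyl ltr_pdivrMr ?wt_gt0 // in hlt.
have e0 : 0 < q * wt (restr z n) - @mu R ((K : set cantor_space) `&` cyl (restr z n)) by rewrite subr_gt0.
have [t [Ct st]] := @mu_approx R ((K : set cantor_space) `&` cyl (restr z n)) _ e0.
rewrite addrC subrK in st.
pose V := \bigcup_i cyl_opt (t i) `|` ~` cyl (restr z n).
exists (cyl (restr z n)), (vietoris_subbase (true, V)); split.
- exact: cyl_open.
- apply: sub_open => /=; apply: openU.
    by apply: bigcup_open => i _; case: (t i) => [c|]; [exact: cyl_open|exact: open0].
  exact: (closed_openC (cyl_closed _)).
- exact: cyl_restr.
- move=> y Ky /=; case: (pselect (cyl (restr z n) y)) => h; last by right.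
  by left; apply: Ct; split.
- move=> [z' K'] [/= z's K'V].
  rewrite /gfun /= (restr_cyl _ _ _ z's) mu_cyl ltr_pdivrMr ?wt_gt0 //.
  have h : ((@mu R ((K' : set cantor_space) `&` cyl (restr z n)))%:E <= \sum_(i <oo) @cyl_weight R (t i))%E.
    apply: mu_le_cover => y [K'y sy]; by have [//|] := K'V y K'y.
  by rewrite -lte_fin; exact: le_lt_trans h st.
Qed.

Lemma g_ge_Gd n (q : R) : Gd [set p : X | q <= gfun n p].
Proof.
pose O (l : seq (seq bool)) :=
  [set p : X | ~ ((p.2 : set cantor_space) `&` cyl (restr p.1 n) `<=` UL l) \/
               q * wt (restr p.1 n) <= \sum_(c <- l) wt c].
have -> : [set p : X | q <= gfun n p] = \bigcap_(l : seq (seq bool)) O l.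
  apply/seteqP; split.
  + move=> [z K] /= hq l _.
    rewrite /gfun /= mu_cyl ler_pdivlMr ?wt_gt0 // in hq.
    case: (pselect ((K : set cantor_space) `&` cyl (restr z n) `<=` UL l)) => h; last by left.
    by right; exact: (le_trans hq (mu_le_list _ _ h)).
  + move=> [z K] /= H; rewrite /gfun /= mu_cyl ler_pdivlMr ?wt_gt0 //.
    rewrite leNgt; apply/negP => hlt.
    have e0 : 0 < q * wt (restr z n) - @mu R ((K : set cantor_space) `&` cyl (restr z n)) by rewrite subr_gt0.
    have [t [Ct st]] := @mu_approx R ((K : set cantor_space) `&` cyl (restr z n)) _ e0.
    rewrite addrC subrK in st.
    have cC : compact ((K : set cantor_space) `&` cyl (restr z n)).
      apply: compact_closedI; [exact: (@cset_compact K)|exact: cyl_closed].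
    have [l [Cl le]] := @fin_sub R _ t cC Ct.
    have := H l I; rewrite /O /= => -[//|hle].
    have := le_lt_trans le st; rewrite lte_fin => /(le_lt_trans hle).
    by rewrite ltxx.
apply: Gd_bigcap => l; apply: open_Gd.
apply: open_prodP => -[z K] /= [nsub|le].
+ case: (pselect (exists y, ((K : set cantor_space) `&` cyl (restr z n)) y /\ ~ UL l y)) => [[y [[Ky sy] ny]]|H]; last first.
    by exfalso; apply: nsub => y Cy; apply: contrapT => ny; apply: H; exists y.
  exists (cyl (restr z n)), (vietoris_subbase (false, cyl (restr z n) `&` ~` UL l)); split.
  * exact: cyl_open.
  * apply: sub_open => /=; apply: openI; [exact: cyl_open|exact: (closed_openC (UL_closed l))].
  * exact: cyl_restr.
  * by exists y.
  * move=> [z' K'] [/= z's [y' [K'y' [sy' ny']]]]; left.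
    by rewrite (restr_cyl _ _ _ z's) => sub; apply: ny'; apply: sub.
+ exists (cyl (restr z n)), setT; split; [exact: cyl_open|exact: openT|exact: cyl_restr|by []|].
  by move=> [z' K'] [/= z's _]; right; rewrite (restr_cyl _ _ _ z's).
Qed.

Lemma gt_S3 (a : R) : S3 [set p : X | a < @density_map R p].
Proof.
have -> : [set p : X | a < @density_map R p] = \bigcup_(qm : rat * nat)
   (if a < ratr qm.1 then \bigcap_(n : nat) (if (qm.2 <= n)%N then [set p : X | ratr qm.1 <= gfun n p] else setT) else set0).
  apply/seteqP; split => p.
  - rewrite /= density_mapE => /(liminf_gt _ _ (fun n => g01 p n)) [q [aq [m Hm]]].
    exists (q, m) => //=; rewrite aq => n _; case: ifP => // mn; exact: Hm.
  - move=> [[q m] _] /=; case: ifP => // aq H.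
    rewrite density_mapE; apply/(liminf_gt _ _ (fun n => g01 p n)).
    by exists q; split => //; exists m => n mn; have := H n I; rewrite mn.
apply: S3_bigcup => -[q m] /=; case: ifP => _; last exact: (Gd_S3 _ Gd0).
apply: Gd_S3; apply: Gd_bigcap => n; case: ifP => _; [exact: g_ge_Gd|exact: (open_Gd _ openT)].
Qed.

Lemma lt_S3 (b : R) : S3 [set p : X | @density_map R p < b].
Proof.
have -> : [set p : X | @density_map R p < b] = \bigcup_(q : rat)
   (if ratr q < b then \bigcap_(m : nat) (\bigcup_(n in [set n | (m <= n)%N]) [set p : X | gfun n p < ratr q]) else set0).
  apply/seteqP; split => p.
  - rewrite /= density_mapE => /(liminf_lt _ _ (fun n => g01 p n)) [q [qb Hm]].
    exists q => //=; rewrite qb => m _; have [n [mn h]] := Hm m; by exists n.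
  - move=> [q _] /=; case: ifP => // qb H.
    rewrite density_mapE; apply/(liminf_lt _ _ (fun n => g01 p n)).
    exists q; split => // m; have [n mn h] := H m I; by exists n.
apply: S3_bigcup => q /=; case: ifP => _; last exact: (Gd_S3 _ Gd0).
apply: Gd_S3; apply: Gd_bigcap => m; apply: open_Gd; apply: bigcup_open => n _.
exact: g_lt_open.
Qed.

Lemma rat_itv (U : set R) (x : R) : open U -> U x ->
  exists a b : rat, [/\ ratr a < x, x < ratr b & `]ratr a, ratr b[ `<=` U].
Proof.
move=> oU Ux.
have : nbhs x U by apply: open_nbhs_nbhs; split.
rewrite -nbhs_ballE /nbhs_ball /nbhs_ball_ => -[_/posnumP[r] xrU].
have [a] : exists a : rat, ratr a \in `]x - r%:num, x[.
  by apply: rat_in_itvoo; rewrite ltrBlDr ltrDl.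
have [b] : exists b : rat, ratr b \in `]x, x + r%:num[.
  by apply: rat_in_itvoo; rewrite ltrDl.
rewrite !in_itv /= => /andP[xb br] /andP[ra ax].
exists a, b; split => // y /=; rewrite in_itv /= => /andP[ay yb].
apply: xrU; rewrite /ball /= ltr_distlC; apply/andP; split.
  exact: lt_trans ra ay.
exact: lt_trans yb br.
Qed.

Lemma part1 : baire_class (X := X) 2 (@density_map R).
Proof.
move=> U oU; apply: S3_Sigma.
have -> : @density_map R @^-1` U = \bigcup_(ab : rat * rat)
   (if pselect (`]ratr ab.1, ratr ab.2[ `<=` U) then
      [set p : X | ratr ab.1 < @density_map R p] `&` [set p : X | @density_map R p < ratr ab.2]
    else set0).
  apply/seteqP; split => p /=.
  - move=> Ux; have [a [b [ax xb sub]]] := rat_itv _ _ oU Ux.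
    exists (a, b) => //=; destruct (pselect _) as [h|h]; [by split|exact: h sub].
  - move=> [[a b] _] /=; destruct (pselect _) as [sub|h] => // -[h1 h2].
    by apply: sub; rewrite /= in_itv /= h1 h2.
apply: S3_bigcup => -[a b] /=; destruct (pselect _) as [h|h]; last exact: (Gd_S3 _ Gd0).
by apply: S3_setI; [exact: gt_S3|exact: lt_S3].
Qed.

End P1.


Lemma restr_mono y w m M : cyl (restr y M) w -> (m <= M)%N -> restr w m = restr y m.
Proof.
rewrite /cyl /= size_restr => E mM.
by rewrite -(take_restr w m M mM) E take_restr.
Qed.

Lemma open_cyl_nbhs (U : set cantor_space) x : open U -> U x -> exists m, cyl (restr x m) `<=` U.
Proof.
move=> oU Ux; apply: contrapT => H.
have H' : forall m, exists y, cyl (restr x m) y /\ ~ U y.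
  move=> m; apply: contrapT => nH; apply: H; exists m => y ry.
  by apply: contrapT => nU; apply: nH; exists y.
have := cantor_space_compact; rewrite compact_In0 => /(_ nat setT (fun m => setT `&` (cyl (restr x m) `&` ~` U))).
case.
- exists (fun m => cyl (restr x m) `&` ~` U) => // m _.
  by apply: closedI; [exact: cyl_closed|exact: open_closedC].
- move=> D' _; pose M := \max_(i <- D') i.
  have [y [yM nUy]] := H' M.
  exists y => i iD; split => //; split => //.
  rewrite /cyl /= size_restr (restr_mono x y i M yM) //.
  exact: (@leq_bigmax_seq _ (enum_fset D') xpredT id i iD isT).
- move=> y Hy.
  have xy : x = y.
    apply: funext => i; have [_ [yi _]] := Hy i.+1 I.
    by have := (proj1 (cylP _ _) yi) i; rewrite size_restr ltnSn nth_restr // => /(_ isT) ->.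
  by have [_ [_ nUy]] := Hy 0%N I; apply: nUy; rewrite -xy.
Qed.

Lemma cyl_open_crit (A : set cantor_space) :
  (forall x, A x -> exists m, cyl (restr x m) `<=` A) -> open A.
Proof.
move=> H; rewrite openE => x /H [m sub]; rewrite /interior.
apply: (filterS sub); apply: open_nbhs_nbhs; split; first exact: cyl_open.
by rewrite /cyl /= size_restr.
Qed.

Lemma cyl_sub_nth a b : cyl a `<=` cyl b -> forall i, (i < size b)%N -> nth false b i = nth false a i.
Proof.
move=> ab i ib; pose w : cantor_space := fun i => nth false a i.
have wa : cyl a w by apply/cylP.
have := proj1 (cylP _ _) (ab _ wa) i ib.
by rewrite /w => <-.
Qed.

Lemma nowhere (C : set cantor_space) : closed C ->
  (forall s, exists y, cyl s y /\ ~ C y) ->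
  forall s, exists s', [/\ (size s < size s')%N, cyl s' `<=` cyl s & forall w, cyl s' w -> ~ C w].
Proof.
move=> cC H s; have [y [sy nCy]] := H s.
have [m sub] := open_cyl_nbhs (~` C) y (closed_openC cC) nCy.
pose M := maxn m (size s).+1.
exists (restr y M); split.
- by rewrite size_restr leq_max leqnn orbT.
- move=> w wM; rewrite /cyl /= (restr_mono y w (size s) M wM).
    by [].
  by rewrite leq_max leqnSn orbT.
- move=> w wM; apply: sub; rewrite /cyl /= size_restr.
  by apply: restr_mono wM _; rewrite leq_max leqnn.
Qed.

Lemma baire_cantor (C : nat -> set cantor_space) : (forall k, closed (C k)) ->
  (forall k s, exists y, cyl s y /\ ~ C k y) -> exists y, forall k, ~ C k y.
Proof.
move=> cC H.
have H2 : forall k s, exists s', [/\ (size s < size s')%N, cyl s' `<=` cyl s & forall w, cyl s' w -> ~ C k w].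
  by move=> k; apply: nowhere; [exact: cC|exact: H].
have [f Hf] := choice (fun ks : nat * seq bool => H2 ks.1 ks.2).
pose st k s := f (k, s).
have Hst : forall k s, [/\ (size s < size (st k s))%N, cyl (st k s) `<=` cyl s & forall w, cyl (st k s) w -> ~ C k w].
  by move=> k s; exact: (Hf (k, s)).
pose sq := fix sq k := if k is k'.+1 then st k' (sq k') else [::].
have sq_size k : (k <= size (sq k))%N.
  elim: k => // k IH /=; have [h _ _] := Hst k (sq k); exact: leq_ltn_trans IH h.
have sq_mono j j' : (j <= j')%N -> cyl (sq j') `<=` cyl (sq j).
  move=> /subnK <-; elim: (j' - j)%N => // d IH.
  rewrite addSn /=; have [_ h _] := Hst (d + j)%N (sq (d + j)%N).
  exact: subset_trans h IH.
pose y : cantor_space := fun i => nth false (sq i.+1) i.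
have ysq k : cyl (sq k) y.
  apply/cylP => i ik; rewrite /y.
  pose j := maxn k i.+1.
  rewrite (cyl_sub_nth _ _ (sq_mono k j (leq_maxl _ _)) i ik).
  rewrite (cyl_sub_nth _ _ (sq_mono i.+1 j (leq_maxr _ _)) i) //.
exists y => k; have [_ _ h] := Hst k (sq k); exact: h (ysq k.+1).
Qed.


Definition z0 : cantor_space := fun _ => false.

Definition Kset (x : cantor_space) : set cantor_space :=
  [set y : cantor_space | forall n, y n = true -> (forall k, (k < n)%N -> y k = false) -> x n = true].

Lemma ft_uniq (y : cantor_space) n n' : y n = true -> (forall k, (k < n)%N -> y k = false) ->
  y n' = true -> (forall k, (k < n')%N -> y k = false) -> n = n'.
Proof.
move=> yn hn yn' hn'; case: (ltngtP n n') => // h.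
- by have := hn' _ h; rewrite yn.
- by have := hn _ h; rewrite yn'.
Qed.

Lemma first_true (y : cantor_space) k : y k = true ->
  exists n, [/\ (n <= k)%N, y n = true & forall j, (j < n)%N -> y j = false].
Proof.
move=> yk; have ex : exists k, (fun k => y k) k by exists k.
case: (ex_minnP ex) => n yn minn; exists n; split => //.
- exact: minn.
- move=> j jn; apply/negbTE/negP => yj.
  by have := minn j yj; rewrite leqNgt jn.
Qed.

Lemma cyl_restr_eq (x x' : cantor_space) m i : cyl (restr x m) x' -> (i < m)%N -> x' i = x i.
Proof.
move=> /cylP h im; have := h i; rewrite size_restr => /(_ im).
by rewrite nth_restr.
Qed.

Lemma Kset_closed x : closed (Kset x).
Proof.
rewrite -openC; apply: cyl_open_crit => y /= nK.
have [n [yn hn xn]] : exists n, [/\ y n = true, (forall k, (k < n)%N -> y k = false) & x n = false].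
  apply: contrapT => H; apply: nK => n yn hn; apply: contrapT => xn.
  by apply: H; exists n; split => //; apply/negbTE/negP => h; apply: xn.
exists n.+1 => w wy wK.
have wn : w n = true by rewrite (cyl_restr_eq _ _ _ _ wy (ltnSn n)).
suff : x n = true by rewrite xn.
apply: wK => // k kn.
by rewrite (cyl_restr_eq _ _ _ _ wy (ltnW kn)) // hn.
Qed.

Lemma Kset_compact x : compact (Kset x).
Proof. exact: (subclosed_compact (Kset_closed x) cantor_space_compact (@subsetT _ _)). Qed.

Definition Kc (x : cantor_space) : compact_set := CompactSet (Kset_compact x).

Lemma z0_Kset x : Kset x z0.
Proof. by move=> n. Qed.

Lemma Kc_cont A : open A -> open (Kc @^-1` A).
Proof.
move=> oA; apply: (@vietoris_preimage_open _ Kc _ A oA) => -[[] U] /= oU.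
- apply: cyl_open_crit => x /= KU.
  have [m sub] := open_cyl_nbhs U z0 oU (KU _ (z0_Kset x)).
  exists m => x' xx' y Ky.
  case: (pselect (exists k, (k < m)%N /\ y k = true)) => [[k [km yk]]|H].
  + have [n [nk yn hn]] := first_true y k yk.
    apply: KU => n' yn' hn'.
    have <- := ft_uniq y n n' yn hn yn' hn'.
    have nm : (n < m)%N := leq_ltn_trans nk km.
    by rewrite -(cyl_restr_eq _ _ _ _ xx' nm); apply: Ky.
  + apply: sub; apply/cylP => i; rewrite size_restr => im; rewrite nth_restr //.
    by apply/negbTE/negP => yi; apply: H; exists i.
- apply: cyl_open_crit => x /= [y [Ky Uy]].
  case: (pselect (exists k, y k = true)) => [[k yk]|H].
  + have [n [_ yn hn]] := first_true y k yk.
    exists n.+1 => x' xx' /=; exists y; split => //.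
    move=> n' yn' hn'; have <- := ft_uniq y n n' yn hn yn' hn'.
    by rewrite (cyl_restr_eq _ _ _ _ xx' (ltnSn n)); apply: Ky.
  + exists 0%N => x' _ /=; exists y; split => // n yn.
    by exfalso; apply: H; exists n.
Qed.

Local Notation X := (cantor_space * compact_set)%type.

Definition phi (x : cantor_space) : X := (z0, Kc x).

Lemma phi_cont W : open W -> open (phi @^-1` W).
Proof.
move=> oW; rewrite openE => x Wx; rewrite /interior.
have cK : continuous Kc by apply/continuousP; exact: Kc_cont.
have : nbhs (phi x) W by apply: (@open_nbhs_nbhs X (phi x) W); split.
move=> [[P Q] [/= nP nQ] PQW].
apply: (@filterS _ (nbhs x) _ (Kc @^-1` Q)); last exact: cK x Q nQ.
move=> x' Qx'.
by apply: (PQW (z0, Kc x')); split => /=; [exact: nbhs_singleton nP|].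
Qed.

Section V.
Context {R : realType}.

Lemma gfun_phi n x : @gfun R n (phi x) = @mu R (Kset x `&` cyl (restr z0 n)) / wt (restr z0 n).
Proof. by rewrite /gfun /= mu_cyl. Qed.

Lemma E1 x : (exists m, forall n, (m <= n)%N -> x n = true) -> 3 / 4 < @density_map R (phi x).
Proof.
move=> [m Hm]; rewrite density_mapE.
apply/(liminf_gt _ _ (fun n => g01 (phi x) n)).
have [q] : exists q : rat, ratr q \in `](3 / 4 : R), 1[ by apply: rat_in_itvoo; lra.
rewrite in_itv /= => /andP[q1 q2]; exists q; split => //; exists m => n mn.
have -> : @gfun R n (phi x) = 1.
  rewrite gfun_phi.
  have -> : Kset x `&` cyl (restr z0 n) = cyl (restr z0 n).
    apply/seteqP; split => [y [] //|y yc]; split => // n' yn' hn'.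
    apply: Hm; rewrite (leq_trans mn) //; rewrite leqNgt; apply/negP => h.
    by have := cyl_restr_eq _ _ _ _ yc h; rewrite yn'.
  by rewrite mu_cyl divff // gt_eqF // wt_gt0.
exact: ltW.
Qed.

Lemma E2 x : (forall m, exists n, (m <= n)%N /\ x n = false) -> @density_map R (phi x) < 3 / 4.
Proof.
move=> Hm; rewrite density_mapE.
apply/(liminf_lt _ _ (fun n => g01 (phi x) n)).
have [q] : exists q : rat, ratr q \in `](2^-1 : R), 3 / 4[ by apply: rat_in_itvoo; lra.
rewrite in_itv /= => /andP[q1 q2]; exists q; split => // m.
have [n [mn xn]] := Hm m; exists n; split => //.
apply: le_lt_trans q1.
rewrite gfun_phi ler_pdivrMr ?wt_gt0 //.
have -> : 2^-1 * @wt R (restr z0 n) = wt (restr z0 n.+1) by rewrite /wt !size_restr exprS invfM.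
apply: mu_le_cyl => y [Ky yc]; apply/cylP => i; rewrite size_restr ltnS leq_eqVlt => /orP[/eqP ->|i_n].
  rewrite nth_restr //; apply/negbTE/negP => yn.
  by have := Ky n yn (fun k kn => cyl_restr_eq _ _ _ _ yc kn); rewrite xn.
rewrite nth_restr; last exact: ltnW.
exact: (cyl_restr_eq z0 y n i yc i_n).
Qed.

End V.



Lemma phi_closed (F : set X) : closed F -> closed (phi @^-1` F).
Proof.
move=> cF; rewrite -openC preimage_setC; apply: phi_cont.
exact: closed_openC.
Qed.

Lemma dichot (y : cantor_space) :
  (exists m, forall n, (m <= n)%N -> y n = true) \/ (forall m, exists n, (m <= n)%N /\ y n = false).
Proof.
case: (pselect (exists m, forall n, (m <= n)%N -> y n = true)) => [h|h]; [by left|right].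
move=> m; apply: contrapT => nh; apply: h; exists m => n mn.
apply: contrapT => yn; apply: nh; exists n; split => //.
by case: (y n) yn.
Qed.

Lemma part2 {R : realType} : ~ baire_class (X := X) 1 (@density_map R).
Proof.
move=> H.
have [F [cF EF]] := Sigma2_closed _ (H _ (@open_gt R (3 / 4))).
have [G [cG EG]] := Sigma2_closed _ (H _ (@open_lt R (3 / 4))).
pose C k := if odd k then phi @^-1` G k./2 else phi @^-1` F k./2.
have := @baire_cantor C.
case.
- by move=> k; rewrite /C; case: ifP => _; apply: phi_closed.
- move=> k s; rewrite /C; case: ifP => _.
  + exists (fun i => if (i < size s)%N then nth false s i else true); split.
      by apply/cylP => i ->.
    move=> hG.
    have : (@density_map R @^-1` [set x | x < 3 / 4]) (phi (fun i => if (i < size s)%N then nth false s i else true)).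
      by rewrite EG; exists k./2.
    rewrite /= ltNge => /negP; apply; apply: ltW; apply: E1.
    by exists (size s) => n; rewrite leqNgt => /negbTE ->.
  + exists (fun i => nth false s i); split; first by apply/cylP.
    move=> hF.
    have : (@density_map R @^-1` [set x | x > 3 / 4]) (phi (fun i => nth false s i)).
      by rewrite EF; exists k./2.
    rewrite /= ltNge => /negP; apply; apply: ltW; apply: E2.
    move=> m; exists (maxn m (size s)); split; first exact: leq_maxl.
    by rewrite nth_default // leq_maxr.
- move=> y Hy; case: (dichot y) => h.
  + have : (@density_map R @^-1` [set x | x > 3 / 4]) (phi y) by exact: E1.
    rewrite EF => -[i _ Fi]; apply: (Hy i.*2); rewrite /C odd_double doubleK; exact: Fi.
  + have : (@density_map R @^-1` [set x | x < 3 / 4]) (phi y) by exact: E2.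
    rewrite EG => -[i _ Gi]; apply: (Hy i.*2.+1); rewrite /C /= odd_double /=.
    by rewrite uphalf_double.
Qed.

End Aux.
Import Aux.

Theorem corollary3p5 (R : realType) :
  baire_class (X := (cantor_space * compact_set)%type) 2 (@density_map R) /\
  ~ baire_class (X := (cantor_space * compact_set)%type) 1 (@density_map R).
Proof. split; [exact: part1|exact: part2]. Qed.
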